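(* Let $\Gamma$ be a group, let $\mathcal{C},\mathcal{C}'$ be monoidal categories, and let $G:\mathcal{C}\to\mathcal{C}'$ and $H:\mathcal{C}'\to\mathcal{C}$ be monoidal equivalences together with isomorphisms of monoidal functors $\alpha: G\circ H\cong \mathrm{id}_{\mathcal{C}'}$ and $\beta: H\circ G\cong \mathrm{id}_{\mathcal{C}}$. Let $(\theta,F)$ be a factor set on $\Gamma$ with coefficients in $\mathcal{C}$, and let $\mathcal{D}=\Delta(\theta,F)$ be the associated crossed product $\Gamma$-extension of $\mathcal{C}$. Then the quadruple $(G,H,\alpha,\beta)$ induces (i) a factor set $(\theta',F')$ on $\Gamma$ with coefficients in $\mathcal{C}'$, and (ii) a $\Gamma$-equivalence $\Delta(\theta,F)\to \Delta(\theta',F')$.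
   Context: A monoidal functor is written $F=(F,\widetilde F,\widehat F)$ with natural isomorphisms $\widetilde F_{X,Y}:F(X\otimes Y)\to F(X)\otimes F(Y)$ and $\widehat F:F(I)\to I$ satisfying the usual coherence conditions. A factor set on a group $\Gamma$ with coefficients in a monoidal category $\mathcal{C}$ is a pair $(\theta,F)$ consisting of a family of monoidal autoequivalences $F^\sigma=(F^\sigma,\widetilde{F^\sigma},\widehat{F^\sigma}):\mathcal{C}\to\mathcal{C}$ ($\sigma\in\Gamma$) and a family of isomorphisms of monoidal functors $\theta^{\sigma,\tau}:F^\sigma F^\tau\to F^{\sigma\tau}$ ($\sigma,\tau\in\Gamma$) such that: (i) $F^1=\mathrm{id}_{\mathcal{C}}$; (ii) $\theta^{1,\sigma}=\mathrm{id}_{F^\sigma}=\theta^{\sigma,1}$ for all $\sigma$; (iii) $\theta^{\sigma\tau,\gamma}\circ(\theta^{\sigma,\tau}F^\gamma)=\theta^{\sigma,\tau\gamma}\circ(F^\sigma\theta^{\tau,\gamma})$ as transformations $F^\sigma F^\tau F^\gamma\to F^{\sigma\tau\gamma}$, for all $\sigma,\tau,\gamma\in\Gamma$. The crossed product $\Delta(\theta,F)$ is the category whose objects are those of $\mathcal{C}$, whose morphisms $A\to B$ are pairs $(u,\sigma)$ with $\sigma\in\Gamma$ and $u:F^\sigma(A)\to B$ a morphism of $\mathcal{C}$, with composition of $A\xrightarrow{(u,\sigma)}B\xrightarrow{(v,\tau)}C$ given by $(v\circ F^\tau(u)\circ(\theta^{\tau,\sigma}_A)^{-1},\tau\sigma)$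 (identities $(\mathrm{id}_A,1)$); it carries the stable $\Gamma$-grading $g(u,\sigma)=\sigma$ and the isomorphism $j:\mathcal{C}\to\mathrm{Ker}\,\Delta(\theta,F)$, $j(u)=(u,1)$, onto the subcategory of morphisms of grade $1$. A $\Gamma$-equivalence between $\Gamma$-graded categories is a functor compatible with the gradings (preserving the grade of every morphism) which is an equivalence of categories. *)

(* Defs.v *)
(* Equality of morphisms is Leibniz equality. *)

Set Implicit Arguments.
Unset Strict Implicit.

Record Group := {
  gcar :> Type;
  gmul : gcar -> gcar -> gcar;
  gone : gcar;
  ginv : gcar -> gcar;
  gmulA : forall x y z, gmul x (gmul y z) = gmul (gmul x y) z;
  gmul1l : forall x, gmul gone x = x;
  gmul1r : forall x, gmul x gone = x;
  gmulVl : forall x, gmul (ginv x) x = gone;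
  gmulVr : forall x, gmul x (ginv x) = gone }.
Arguments gmul {g} _ _.
Arguments gone {g}.
Arguments ginv {g} _.

Record CatData := {
  ob :> Type;
  hom : ob -> ob -> Type;
  idm : forall A, hom A A;
  comp : forall A B C, hom B C -> hom A B -> hom A C }.
Arguments hom {c} _ _.
Arguments idm {c} _.
Arguments comp {c A B C} _ _.
Notation "g ∘ f" := (comp g f) (at level 40, left associativity).

Definition is_category (C : CatData) : Prop :=
  (forall (A B : C) (f : hom A B), idm B ∘ f = f) /\
  (forall (A B : C) (f : hom A B), f ∘ idm A = f) /\
  (forall (A B D E : C) (f : hom A B) (g : hom B D) (h : hom D E),
      h ∘ (g ∘ f) = (h ∘ g) ∘ f).

Definition is_iso (C : CatData) (A B : C) (f : hom A B) : Prop :=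
  exists g : hom B A, g ∘ f = idm A /\ f ∘ g = idm B.

Definition hom_cast (C : CatData) (A A' B B' : C) (e1 : A = A') (e2 : B = B')
  (f : hom A B) : hom A' B' :=
  match e1 in _ = A1 return hom A1 B' with
  | eq_refl => match e2 in _ = B1 return hom A B1 with eq_refl => f end
  end.

Record FunctorData (C D : CatData) := {
  Fo : C -> D;
  Fm : forall A B : C, hom A B -> hom (Fo A) (Fo B) }.
Arguments Fm {C D} _ {A B} _.

Definition is_functor (C D : CatData) (F : FunctorData C D) : Prop :=
  (forall A : C, Fm F (idm A) = idm (Fo F A)) /\
  (forall (A B E : C) (f : hom A B) (g : hom B E), Fm F (g ∘ f) = Fm F g ∘ Fm F f).

Definition fd_comp (C D E : CatData) (G : FunctorData D E) (F : FunctorData C D)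
  : FunctorData C E :=
  {| Fo := fun X => Fo G (Fo F X); Fm := fun A B f => Fm G (Fm F f) |}.

Definition fd_id (C : CatData) : FunctorData C C :=
  {| Fo := fun X => X; Fm := fun A B f => f |}.

Definition is_nat_iso (C D : CatData) (F G : FunctorData C D)
  (eta : forall X : C, hom (Fo F X) (Fo G X)) : Prop :=
  (forall (X Y : C) (f : hom X Y), Fm G f ∘ eta X = eta Y ∘ Fm F f) /\
  (forall X : C, is_iso (eta X)).

Arguments is_nat_iso {C D} F G eta.

Definition is_equivalence (C D : CatData) (F : FunctorData C D) : Prop :=
  is_functor F /\
  exists K : FunctorData D C, is_functor K /\
    (exists eta, is_nat_iso (fd_comp K F) (fd_id C) eta) /\
    (exists eps, is_nat_iso (fd_comp F K) (fd_id D) eps).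

Record MonCatData := {
  mc :> CatData;
  tens : mc -> mc -> mc;
  tensm : forall A A' B B' : mc, hom A A' -> hom B B' -> hom (tens A B) (tens A' B');
  munit : mc;
  massoc : forall A B C : mc, hom (tens (tens A B) C) (tens A (tens B C));
  mlunit : forall A : mc, hom (tens munit A) A;
  mrunit : forall A : mc, hom (tens A munit) A }.
Arguments tens {m} _ _.
Arguments tensm {m A A' B B'} _ _.
Arguments munit {m}.
Arguments massoc {m} _ _ _.
Arguments mlunit {m} _.
Arguments mrunit {m} _.

Definition is_monoidal (M : MonCatData) : Prop :=
  is_category M /\
  (forall A B : M, tensm (idm A) (idm B) = idm (tens A B)) /\
  (forall (A A' A'' B B' B'' : M) (f : hom A A') (f' : hom A' A'')
          (g : hom B B') (g' : hom B' B''),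
      tensm (f' ∘ f) (g' ∘ g) = tensm f' g' ∘ tensm f g) /\
  (forall A B C : M, is_iso (massoc A B C)) /\
  (forall A : M, is_iso (mlunit A)) /\
  (forall A : M, is_iso (mrunit A)) /\
  (forall (A A' B B' C C' : M) (f : hom A A') (g : hom B B') (h : hom C C'),
      massoc A' B' C' ∘ tensm (tensm f g) h = tensm f (tensm g h) ∘ massoc A B C) /\
  (forall (A A' : M) (f : hom A A'),
      mlunit A' ∘ tensm (idm munit) f = f ∘ mlunit A) /\
  (forall (A A' : M) (f : hom A A'),
      mrunit A' ∘ tensm f (idm munit) = f ∘ mrunit A) /\
  (forall A B C D : M,
      tensm (idm A) (massoc B C D) ∘ massoc A (tens B C) D ∘ tensm (massoc A B C) (idm D)
      = massoc A B (tens C D) ∘ massoc (tens A B) C D) /\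
  (forall A B : M,
      tensm (idm A) (mlunit B) ∘ massoc A munit B = tensm (mrunit A) (idm B)).

Record MonCat := { mcd :> MonCatData; mc_ax : is_monoidal mcd }.

Record MFData (C D : MonCatData) := {
  fobj : C -> D;
  fhom : forall A B : C, hom A B -> hom (fobj A) (fobj B);
  ftil : forall X Y : C, hom (fobj (tens X Y)) (tens (fobj X) (fobj Y));
  fhat : hom (fobj munit) munit }.
Arguments fobj {C D} _ _.
Arguments fhom {C D} _ {A B} _.
Arguments ftil {C D} _ _ _.
Arguments fhat {C D} _.

Definition is_monoidal_functor (C D : MonCatData) (F : MFData C D) : Prop :=
  (forall A : C, fhom F (idm A) = idm (fobj F A)) /\
  (forall (A B E : C) (f : hom A B) (g : hom B E), fhom F (g ∘ f) = fhom F g ∘ fhom F f) /\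
  (forall X Y : C, is_iso (ftil F X Y)) /\
  is_iso (fhat F) /\
  (forall (X X' Y Y' : C) (f : hom X X') (g : hom Y Y'),
      tensm (fhom F f) (fhom F g) ∘ ftil F X Y = ftil F X' Y' ∘ fhom F (tensm f g)) /\
  (forall X Y Z : C,
      massoc (fobj F X) (fobj F Y) (fobj F Z) ∘ tensm (ftil F X Y) (idm (fobj F Z))
        ∘ ftil F (tens X Y) Z
      = tensm (idm (fobj F X)) (ftil F Y Z) ∘ ftil F X (tens Y Z) ∘ fhom F (massoc X Y Z)) /\
  (forall X : C,
      mlunit (fobj F X) ∘ tensm (fhat F) (idm (fobj F X)) ∘ ftil F munit X
      = fhom F (mlunit X)) /\
  (forall X : C,
      mrunit (fobj F X) ∘ tensm (idm (fobj F X)) (fhat F) ∘ ftil F X munit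
      = fhom F (mrunit X)).

Record MonFunctor (C D : MonCatData) := {
  mfd :> MFData C D; mf_ax : is_monoidal_functor mfd }.

Definition mf_comp (C D E : MonCatData) (G : MFData D E) (F : MFData C D) : MFData C E :=
  {| fobj := fun X => fobj G (fobj F X);
     fhom := fun A B f => fhom G (fhom F f);
     ftil := fun X Y => ftil G (fobj F X) (fobj F Y) ∘ fhom G (ftil F X Y);
     fhat := fhat G ∘ fhom G (fhat F) |}.

Definition mf_id (C : MonCatData) : MFData C C :=
  {| fobj := fun X => X; fhom := fun A B f => f;
     ftil := fun X Y => idm (tens X Y); fhat := idm munit |}.

Definition is_mon_nat (C D : MonCatData) (F G : MFData C D)
  (eta : forall X : C, hom (fobj F X) (fobj G X)) : Prop :=
  (forall (X Y : C) (f : hom X Y), fhom G f ∘ eta X = eta Y ∘ fhom F f) /\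
  (forall X Y : C, ftil G X Y ∘ eta (tens X Y) = tensm (eta X) (eta Y) ∘ ftil F X Y) /\
  fhat G ∘ eta munit = fhat F.

Arguments is_mon_nat {C D} F G eta.

Definition is_mon_iso (C D : MonCatData) (F G : MFData C D)
  (eta : forall X : C, hom (fobj F X) (fobj G X)) : Prop :=
  is_mon_nat F G eta /\ forall X : C, is_iso (eta X).

Arguments is_mon_iso {C D} F G eta.

Definition is_monoidal_equivalence (C D : MonCatData) (F : MFData C D) : Prop :=
  is_monoidal_functor F /\
  exists K : MFData D C, is_monoidal_functor K /\
    (exists a, is_mon_iso (mf_comp F K) (mf_id D) a) /\
    (exists b, is_mon_iso (mf_comp K F) (mf_id C) b).

Definition fobj_eq (C D : MonCatData) (F G : MFData C D) (e : F = G) (X : C)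
  : fobj F X = fobj G X := f_equal (fun K => fobj K X) e.

(* Factor sets.  theta^{s,t} : F^s F^t -> F^{st}; we also carry its    *)
(* (unique) inverse, needed to define composition in the crossed       *)
(* product.  Equalities that hold only up to 1*s = s, s*1 = s,         *)
(* s(tg) = (st)g, F^1 = id are stated through the transport hom_cast.  *)
Record is_factor_set (Γ : Group) (C : MonCatData) (F : Γ -> MonFunctor C C)
  (θ : forall (s t : Γ) (X : C), hom (fobj (F s) (fobj (F t) X)) (fobj (F (gmul s t)) X))
  (θi : forall (s t : Γ) (X : C), hom (fobj (F (gmul s t)) X) (fobj (F s) (fobj (F t) X)))
  : Prop := {
  fs_autoeq : forall s, is_monoidal_equivalence (F s);
  fs_iso : forall s t, is_mon_iso (mf_comp (F s) (F t)) (F (gmul s t)) (θ s t);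
  fs_inv : forall s t X, θi s t X ∘ θ s t X = idm _ /\ θ s t X ∘ θi s t X = idm _;
  fs_one : mfd (F gone) = mf_id C;
  fs_unitl : forall s X,
    hom_cast (fobj_eq fs_one (fobj (F s) X))
             (f_equal (fun r => fobj (F r) X) (gmul1l s)) (θ gone s X)
    = idm (fobj (F s) X);
  fs_unitr : forall s X,
    hom_cast (f_equal (fobj (F s)) (fobj_eq fs_one X))
             (f_equal (fun r => fobj (F r) X) (gmul1r s)) (θ s gone X)
    = idm (fobj (F s) X);
  fs_cocycle : forall s t g X,
    θ (gmul s t) g X ∘ θ s t (fobj (F g) X)
    = hom_cast eq_refl (f_equal (fun r => fobj (F r) X) (gmulA s t g))
        (θ s (gmul t g) X ∘ fhom (F s) (θ t g X)) }.

Arguments is_factor_set {Γ C} F θ θi.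

Record FactorSet (Γ : Group) (C : MonCatData) := {
  fsF : Γ -> MonFunctor C C;
  fsθ : forall (s t : Γ) (X : C), hom (fobj (fsF s) (fobj (fsF t) X)) (fobj (fsF (gmul s t)) X);
  fsθi : forall (s t : Γ) (X : C), hom (fobj (fsF (gmul s t)) X) (fobj (fsF s) (fobj (fsF t) X));
  fs_ax : is_factor_set fsF fsθ fsθi }.

(* Crossed product Delta(theta, F): objects of C, morphisms A -> B are *)
(* pairs (s, u) with u : F^s A -> B; (v,t)∘(u,s) =                     *)
(* (v ∘ F^t(u) ∘ (theta^{t,s}_A)^{-1}, ts); identity (id_A, 1).        *)
Definition Delta (Γ : Group) (C : MonCatData) (fs : FactorSet Γ C) : CatData :=
  {| ob := ob C;
     hom := fun A B => { s : Γ & hom (fobj (fsF fs s) A) B };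
     idm := fun A => existT (fun s : Γ => hom (fobj (fsF fs s) A) A) gone
              (hom_cast (eq_sym (fobj_eq (fs_one (fs_ax fs)) A)) eq_refl (idm A));
     comp := fun A B D (v : { s : Γ & hom (fobj (fsF fs s) B) D })
                       (u : { s : Γ & hom (fobj (fsF fs s) A) B }) =>
       existT (fun s : Γ => hom (fobj (fsF fs s) A) D) (gmul (projT1 v) (projT1 u))
         (projT2 v ∘ fhom (fsF fs (projT1 v)) (projT2 u) ∘ fsθi fs (projT1 v) (projT1 u) A) |}.

Definition grade (Γ : Group) (C : MonCatData) (fs : FactorSet Γ C) (A B : Delta fs)
  (f : hom A B) : Γ := projT1 f.

Definition is_Gamma_equivalence (Γ : Group) (C C' : MonCatData)
  (fs : FactorSet Γ C) (fs' : FactorSet Γ C') (Φ : FunctorData (Delta fs) (Delta fs')) : Prop :=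
  (forall (A B : Delta fs) (f : hom A B), grade (Fm Φ f) = grade f) /\
  is_equivalence Φ.

(* Main.v *)
Require Import Defs.
From Stdlib Require Import ProofIrrelevance ClassicalEpsilon FunctionalExtensionality.

Set Implicit Arguments.
Unset Strict Implicit.

Lemma cidl (M : MonCat) (A B : M) (f : hom A B) : idm B ∘ f = f.
Proof. destruct (mc_ax M) as [[h _] _]. apply h. Qed.
Lemma cidr (M : MonCat) (A B : M) (f : hom A B) : f ∘ idm A = f.
Proof. destruct (mc_ax M) as [[_ [h _]] _]. apply h. Qed.
Lemma cassoc (M : MonCat) (A B D E : M) (f : hom A B) (g : hom B D) (h : hom D E) :
  h ∘ (g ∘ f) = h ∘ g ∘ f.
Proof. destruct (mc_ax M) as [[_ [_ h']] _]. apply h'. Qed.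
Lemma tens_id (M : MonCat) (A B : M) : tensm (idm A) (idm B) = idm (tens A B).
Proof. destruct (mc_ax M) as [_ [h _]]. apply h. Qed.
Lemma tens_comp (M : MonCat) (A A' A'' B B' B'' : M) (f : hom A A') (f' : hom A' A'')
  (g : hom B B') (g' : hom B' B'') :
  tensm (f' ∘ f) (g' ∘ g) = tensm f' g' ∘ tensm f g.
Proof. destruct (mc_ax M) as [_ [_ [h _]]]. apply h. Qed.
Lemma lpref (M : MonCat) (B D E : M) (p : hom D E) (q : hom B D) (r : hom B E) :
  p ∘ q = r -> forall W (x : hom E W), x ∘ p ∘ q = x ∘ r.
Proof. intros h W x. rewrite <- cassoc, h. reflexivity. Qed.

Definition iinv (C : CatData) (A B : C) (f : hom A B) (h : is_iso f) : hom B A :=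
  proj1_sig (constructive_indefinite_description _ h).
Lemma iinv_l (C : CatData) (A B : C) (f : hom A B) (h : is_iso f) : iinv h ∘ f = idm A.
Proof. unfold iinv. destruct (constructive_indefinite_description _ h) as [g [h1 h2]]. exact h1. Qed.
Lemma iinv_r (C : CatData) (A B : C) (f : hom A B) (h : is_iso f) : f ∘ iinv h = idm B.
Proof. unfold iinv. destruct (constructive_indefinite_description _ h) as [g [h1 h2]]. exact h2. Qed.

Lemma iso_comp (M : MonCat) (A B D : M) (f : hom A B) (g : hom B D) :
  is_iso f -> is_iso g -> is_iso (g ∘ f).
Proof.
  intros [f' [f1 f2]] [g' [g1 g2]]. exists (f' ∘ g'). split.
  - rewrite !cassoc, <- (cassoc g g'), g1, cidr, f1. reflexivity.
  - rewrite !cassoc, <- (cassoc f' f), f2, cidr, g2. reflexivity.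
Qed.
Lemma iso_id (M : MonCat) (A : M) : is_iso (idm A).
Proof. exists (idm A). split; apply cidl. Qed.
Lemma iso_inv (C : CatData) (A B : C) (f : hom A B) (h : is_iso f) : is_iso (iinv h).
Proof. exists f. split; [apply iinv_r | apply iinv_l]. Qed.
Lemma iso_cancel_l (M : MonCat) (A B D : M) (f : hom A B) (g g' : hom D A) :
  is_iso f -> f ∘ g = f ∘ g' -> g = g'.
Proof. intros [f' [f1 f2]] e. rewrite <- (cidl g), <- (cidl g'), <- f1, <- !cassoc, e. reflexivity. Qed.
Lemma iso_cancel_r (M : MonCat) (A B D : M) (f : hom A B) (g g' : hom B D) :
  is_iso f -> g ∘ f = g' ∘ f -> g = g'.
Proof. intros [f' [f1 f2]] e. rewrite <- (cidr g), <- (cidr g'), <- f2, !cassoc, e. reflexivity. Qed.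

Lemma fid (C D : MonCatData) (K : MFData C D) (hK : is_monoidal_functor K) (A : C) :
  fhom K (idm A) = idm (fobj K A).
Proof. apply hK. Qed.
Lemma fcomp (C D : MonCatData) (K : MFData C D) (hK : is_monoidal_functor K) (A B E : C)
  (f : hom A B) (g : hom B E) : fhom K (g ∘ f) = fhom K g ∘ fhom K f.
Proof. apply hK. Qed.
Lemma ftil_iso (C D : MonCatData) (K : MFData C D) (hK : is_monoidal_functor K) X Y :
  is_iso (ftil K X Y).
Proof. apply hK. Qed.
Lemma fhat_iso (C D : MonCatData) (K : MFData C D) (hK : is_monoidal_functor K) :
  is_iso (fhat K).
Proof. apply hK. Qed.
Lemma ftil_nat (C D : MonCatData) (K : MFData C D) (hK : is_monoidal_functor K)
  (X X' Y Y' : C) (f : hom X X') (g : hom Y Y') :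
  tensm (fhom K f) (fhom K g) ∘ ftil K X Y = ftil K X' Y' ∘ fhom K (tensm f g).
Proof. apply hK. Qed.
Lemma fiso (C D : MonCat) (K : MFData C D) (hK : is_monoidal_functor K) (A B : C)
  (f : hom A B) : is_iso f -> is_iso (fhom K f).
Proof.
  intros [g [g1 g2]]. exists (fhom K g). split; rewrite <- fcomp by exact hK.
  - rewrite g1; apply fid, hK.
  - rewrite g2; apply fid, hK.
Qed.

Unset Implicit Arguments.
Set Strict Implicit.

Set Implicit Arguments.
Unset Strict Implicit.

Definition heq (C : CatData) (A B A' B' : C) (f : hom A B) (g : hom A' B') : Prop :=
  exists (e1 : A = A') (e2 : B = B'), hom_cast e1 e2 f = g.
Notation "f ≅ g" := (heq f g) (at level 70).

Lemma hom_cast_refl (C : CatData) (A B : C) (e1 : A = A) (e2 : B = B) (f : hom A B) :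
  hom_cast e1 e2 f = f.
Proof. rewrite (proof_irrelevance _ e1 eq_refl), (proof_irrelevance _ e2 eq_refl). reflexivity. Qed.

Lemma heq_refl (C : CatData) (A B : C) (f : hom A B) : f ≅ f.
Proof. exists eq_refl, eq_refl. reflexivity. Qed.
Lemma heq_eq (C : CatData) (A B : C) (f g : hom A B) : f ≅ g -> f = g.
Proof. intros [e1 [e2 h]]. rewrite hom_cast_refl in h. exact h. Qed.
Lemma eq_heq (C : CatData) (A B : C) (f g : hom A B) : f = g -> f ≅ g.
Proof. intros ->. apply heq_refl. Qed.
Lemma heq_sym (C : CatData) (A B A' B' : C) (f : hom A B) (g : hom A' B') : f ≅ g -> g ≅ f.
Proof. intros [e1 [e2 h]]. subst A' B'. rewrite hom_cast_refl in h. subst. apply heq_refl. Qed.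
Lemma heq_trans (C : CatData) (A B A' B' A'' B'' : C) (f : hom A B) (g : hom A' B')
  (k : hom A'' B'') : f ≅ g -> g ≅ k -> f ≅ k.
Proof.
  intros [e1 [e2 h]] [e3 [e4 h']]. subst A' B' A'' B''.
  rewrite hom_cast_refl in h, h'. subst. apply heq_refl.
Qed.
Lemma heq_cast (C : CatData) (A B A' B' : C) (e1 : A = A') (e2 : B = B') (f : hom A B) :
  hom_cast e1 e2 f ≅ f.
Proof. apply heq_sym. exists e1, e2. reflexivity. Qed.
Lemma cast_heq (C : CatData) (A B A' B' : C) (e1 : A = A') (e2 : B = B') (f : hom A B)
  (g : hom A' B') : f ≅ g -> hom_cast e1 e2 f = g.
Proof. intros h. apply heq_eq. eapply heq_trans; [apply heq_cast | exact h]. Qed.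
Lemma heq_comp (C : CatData) (A B D A' B' D' : C) (f : hom A B) (g : hom B D)
  (f' : hom A' B') (g' : hom B' D') : f ≅ f' -> g ≅ g' -> g ∘ f ≅ g' ∘ f'.
Proof.
  intros [e1 [e2 h]] [e3 [e4 h']]. subst A' B' D'.
  rewrite hom_cast_refl in h, h'. subst. apply heq_refl.
Qed.
Lemma heq_fhom (C D : MonCatData) (K : MFData C D) (A B A' B' : C) (f : hom A B)
  (f' : hom A' B') : f ≅ f' -> fhom K f ≅ fhom K f'.
Proof. intros [e1 [e2 h]]. subst A' B'. rewrite hom_cast_refl in h. subst. apply heq_refl. Qed.
Lemma heq_tensm (M : MonCatData) (A B A' B' X Y X' Y' : M) (f : hom A B) (f' : hom A' B')
  (g : hom X Y) (g' : hom X' Y') : f ≅ f' -> g ≅ g' -> tensm f g ≅ tensm f' g'.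
Proof.
  intros [e1 [e2 h]] [e3 [e4 h']]. subst A' B' X' Y'.
  rewrite hom_cast_refl in h, h'. subst. apply heq_refl.
Qed.
Lemma heq_fam (C : CatData) (T : Type) (P Q : T -> C) (a : forall t, hom (P t) (Q t))
  (t t' : T) : t = t' -> a t ≅ a t'.
Proof. intros ->. apply heq_refl. Qed.
Lemma heq_idm (C : CatData) (A A' : C) : A = A' -> idm A ≅ idm A'.
Proof. intros ->. apply heq_refl. Qed.

Lemma existT_heq (C : CatData) (T : Type) (P : T -> C) (B : C) (r s : T)
  (x : hom (P r) B) (y : hom (P s) B) :
  r = s -> x ≅ y -> existT (fun t => hom (P t) B) r x = existT (fun t => hom (P t) B) s y.
Proof. intros <- h. rewrite (heq_eq h). reflexivity. Qed.

Lemma fhom_id_heq (C : MonCatData) (K : MFData C C) (e : K = mf_id C) (A B : C) (f : hom A B) :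
  fhom K f ≅ f.
Proof. subst K. apply heq_refl. Qed.

Unset Implicit Arguments.
Set Strict Implicit.

Set Implicit Arguments.
Unset Strict Implicit.

Lemma tens_iso (M : MonCat) (A B X Y : M) (f : hom A B) (g : hom X Y) :
  is_iso f -> is_iso g -> is_iso (tensm f g).
Proof.
  intros [f' [f1 f2]] [g' [g1 g2]]. exists (tensm f' g').
  split; rewrite <- tens_comp; [rewrite f1, g1 | rewrite f2, g2]; apply tens_id.
Qed.

Lemma mon_nat_vcomp (C : MonCatData) (D : MonCat) (F G K : MFData C D) a b :
  is_mon_nat F G a -> is_mon_nat G K b -> is_mon_nat F K (fun X => b X ∘ a X).
Proof.
  intros [a1 [a2 a3]] [b1 [b2 b3]]. split; [|split].
  - intros X Y f. rewrite cassoc, b1, <- cassoc, a1, cassoc. reflexivity.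
  - intros X Y. rewrite cassoc, b2, <- cassoc, a2, cassoc, <- tens_comp. reflexivity.
  - rewrite cassoc, b3, a3. reflexivity.
Qed.
Lemma mon_iso_vcomp (C : MonCatData) (D : MonCat) (F G K : MFData C D) a b :
  is_mon_iso F G a -> is_mon_iso G K b -> is_mon_iso F K (fun X => b X ∘ a X).
Proof.
  intros [ha ia] [hb ib]. split; [eapply mon_nat_vcomp; eauto|].
  intros X. apply iso_comp; auto.
Qed.

Lemma mon_nat_idm (C : MonCatData) (D : MonCat) (F : MFData C D) :
  is_mon_iso F F (fun X => idm _).
Proof.
  split; [split; [|split]|].
  - intros. rewrite cidl, cidr. reflexivity.
  - intros. rewrite tens_id, cidl, cidr. reflexivity.
  - apply cidr.
  - intros. apply iso_id.
Qed.

Lemma mon_nat_inv (C : MonCatData) (D : MonCat) (F G : MFData C D) a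
  (ha : forall X, is_iso (a X)) :
  is_mon_nat F G a -> is_mon_nat G F (fun X => iinv (ha X)).
Proof.
  intros [a1 [a2 a3]]. split; [|split].
  - intros X Y f. apply (iso_cancel_l (ha Y)).
    rewrite !cassoc, iinv_r, cidl, <- a1, <- cassoc, iinv_r, cidr. reflexivity.
  - intros X Y. apply (iso_cancel_l (tens_iso (ha X) (ha Y))).
    rewrite !cassoc, <- tens_comp, !iinv_r, tens_id, cidl, <- a2, <- cassoc, iinv_r, cidr.
    reflexivity.
  - rewrite <- a3, <- cassoc, iinv_r, cidr. reflexivity.
Qed.
Lemma mon_iso_inv (C : MonCatData) (D : MonCat) (F G : MFData C D) a
  (ha : forall X, is_iso (a X)) :
  is_mon_nat F G a -> is_mon_iso G F (fun X => iinv (ha X)).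
Proof. intros h. split; [apply mon_nat_inv, h | intros; apply iso_inv]. Qed.

Lemma mon_nat_whiskR (B C : MonCatData) (D : MonCat) (F G : MFData C D) (K : MFData B C) a :
  is_mon_nat F G a -> is_mon_nat (mf_comp F K) (mf_comp G K) (fun X => a (fobj K X)).
Proof.
  intros [a1 [a2 a3]]. split; [|split]; simpl.
  - intros X Y f. apply a1.
  - intros X Y. rewrite <- cassoc, a1, cassoc, a2, cassoc. reflexivity.
  - rewrite <- cassoc, a1, cassoc, a3. reflexivity.
Qed.
Lemma mon_iso_whiskR (B C : MonCatData) (D : MonCat) (F G : MFData C D) (K : MFData B C) a :
  is_mon_iso F G a -> is_mon_iso (mf_comp F K) (mf_comp G K) (fun X => a (fobj K X)).
Proof. intros [h i]. split; [apply mon_nat_whiskR, h | intros; apply i]. Qed.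

Lemma mon_nat_whiskL (B : MonCatData) (C D : MonCat) (F G : MFData B C) (L : MFData C D) a :
  is_monoidal_functor L ->
  is_mon_nat F G a -> is_mon_nat (mf_comp L F) (mf_comp L G) (fun X => fhom L (a X)).
Proof.
  intros hL [a1 [a2 a3]]. split; [|split]; simpl.
  - intros X Y f. rewrite <- !(fcomp hL), a1. reflexivity.
  - intros X Y. rewrite <- cassoc, <- (fcomp hL), a2, (fcomp hL), cassoc, <- (ftil_nat hL), cassoc.
      reflexivity.
  - rewrite <- cassoc, <- (fcomp hL), a3. reflexivity.
Qed.
Lemma mon_iso_whiskL (B : MonCatData) (C D : MonCat) (F G : MFData B C) (L : MFData C D) a :
  is_monoidal_functor L ->
  is_mon_iso F G a -> is_mon_iso (mf_comp L F) (mf_comp L G) (fun X => fhom L (a X)).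
Proof. intros hL [h i]. split; [apply mon_nat_whiskL; auto | intros; apply fiso; auto]. Qed.

Lemma mon_iso_extL (C : MonCatData) (D : MonCat) (F G : MFData C D) a ft fh :
  (forall X Y, ft X Y = ftil F X Y) -> fh = fhat F -> is_mon_iso F G a ->
  is_mon_iso (@Build_MFData C D (fobj F) (@fhom _ _ F) ft fh) G a.
Proof.
  intros e1 e2 [[a1 [a2 a3]] i]. split; [split; [|split]|]; simpl; auto.
  - intros X Y. rewrite e1. apply a2.
  - rewrite e2. apply a3.
Qed.
Lemma mon_iso_extR (C : MonCatData) (D : MonCat) (F G : MFData C D) a ft fh :
  (forall X Y, ft X Y = ftil G X Y) -> fh = fhat G -> is_mon_iso F G a ->
  is_mon_iso F (@Build_MFData C D (fobj G) (@fhom _ _ G) ft fh) a.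
Proof.
  intros e1 e2 [[a1 [a2 a3]] i]. split; [split; [|split]|]; simpl; auto.
  - intros X Y. rewrite e1. apply a2.
  - rewrite e2. apply a3.
Qed.

Lemma mf_id_monoidal (C : MonCat) : is_monoidal_functor (mf_id C).
Proof.
  repeat split; simpl; intros.
  all: try apply iso_id.
  all: rewrite ?tens_id, ?cidl, ?cidr; reflexivity.
Qed.

Unset Implicit Arguments.
Set Strict Implicit.

Set Implicit Arguments.
Unset Strict Implicit.

Lemma mf_comp_monoidal (C D E : MonCat) (G : MFData D E) (F : MFData C D) :
  is_monoidal_functor G -> is_monoidal_functor F -> is_monoidal_functor (mf_comp G F).
Proof.
  intros hG hF. pose proof hG as hG'. pose proof hF as hF'.
  destruct hG' as [G1 [G2 [G3 [G4 [G5 [G6 [G7 G8]]]]]]].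
  destruct hF' as [F1 [F2 [F3 [F4 [F5 [F6 [F7 F8]]]]]]].
  split; [|split; [|split; [|split; [|split; [|split; [|split]]]]]]; simpl.
  - intros A. rewrite F1, G1. reflexivity.
  - intros. rewrite F2, G2. reflexivity.
  - intros. apply iso_comp; [apply fiso; auto | auto].
  - apply iso_comp; [apply fiso; auto | auto].
  - intros. rewrite cassoc, G5, <- cassoc, <- G2, F5, G2, cassoc. reflexivity.
  - intros X Y Z.
    assert (H1 : tensm (fhom G (ftil F X Y)) (idm (fobj G (fobj F Z)))
                 ∘ ftil G (fobj F (tens X Y)) (fobj F Z)
               = ftil G (tens (fobj F X) (fobj F Y)) (fobj F Z)
                 ∘ fhom G (tensm (ftil F X Y) (idm (fobj F Z)))).
    { rewrite <- G1. apply G5. }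
    assert (H2 : tensm (idm (fobj G (fobj F X))) (fhom G (ftil F Y Z))
                 ∘ ftil G (fobj F X) (fobj F (tens Y Z))
               = ftil G (fobj F X) (tens (fobj F Y) (fobj F Z))
                 ∘ fhom G (tensm (idm (fobj F X)) (ftil F Y Z))).
    { rewrite <- G1. apply G5. }
    rewrite <- (cidl (idm (fobj G (fobj F Z)))), <- (cidl (idm (fobj G (fobj F X)))).
    rewrite !tens_comp, !cassoc, (lpref H1), (lpref H2), !cassoc, G6.
    rewrite <- !cassoc, <- !G2, !cassoc, F6. reflexivity.
  - intros X.
    assert (H3 : tensm (fhom G (fhat F)) (idm (fobj G (fobj F X))) ∘ ftil G (fobj F munit) (fobj F X)
               = ftil G munit (fobj F X) ∘ fhom G (tensm (fhat F) (idm (fobj F X)))).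
    { rewrite <- G1. apply G5. }
    rewrite <- (cidl (idm (fobj G (fobj F X)))), tens_comp, !cassoc, (lpref H3), !cassoc, G7.
    rewrite <- !cassoc, <- !G2, !cassoc, F7. reflexivity.
  - intros X.
    assert (H3 : tensm (idm (fobj G (fobj F X))) (fhom G (fhat F)) ∘ ftil G (fobj F X) (fobj F munit)
               = ftil G (fobj F X) munit ∘ fhom G (tensm (idm (fobj F X)) (fhat F))).
    { rewrite <- G1. apply G5. }
    rewrite <- (cidl (idm (fobj G (fobj F X)))), tens_comp, !cassoc, (lpref H3), !cassoc, G8.
    rewrite <- !cassoc, <- !G2, !cassoc, F8. reflexivity.
Qed.

Unset Implicit Arguments.
Set Strict Implicit.

Record Setup := {
  gΓ : Group; gC : MonCat; gC' : MonCat;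
  gG : MonFunctor gC gC'; gH : MonFunctor gC' gC;
  gα : forall X : gC', hom (fobj gG (fobj gH X)) X;
  gβ : forall X : gC, hom (fobj gH (fobj gG X)) X;
  ghα : is_mon_iso (mf_comp gG gH) (mf_id gC') gα;
  ghβ : is_mon_iso (mf_comp gH gG) (mf_id gC) gβ;
  gfs : FactorSet gΓ gC }.

Definition αi (S : Setup) (X : gC' S) : hom X (fobj (gG S) (fobj (gH S) X)) :=
  @iinv _ _ _ (gα S X) (proj2 (ghα S) X).
Definition βi (S : Setup) (X : gC S) : hom X (fobj (gH S) (fobj (gG S) X)) :=
  @iinv _ _ _ (gβ S X) (proj2 (ghβ S) X).
Definition α' (S : Setup) (X : gC' S) : hom (fobj (gG S) (fobj (gH S) X)) X :=
  gα S X ∘ (fhom (gG S) (gβ S (fobj (gH S) X)) ∘ αi S (fobj (gG S) (fobj (gH S) X))).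

Lemma hG (S : Setup) : is_monoidal_functor (gG S). Proof. apply mf_ax. Qed.
Lemma hH (S : Setup) : is_monoidal_functor (gH S). Proof. apply mf_ax. Qed.

Lemma α_nat (S : Setup) (X Y : gC' S) (f : hom X Y) :
  f ∘ gα S X = gα S Y ∘ fhom (gG S) (fhom (gH S) f).
Proof. apply (proj1 (proj1 (ghα S))). Qed.
Lemma β_nat (S : Setup) (X Y : gC S) (f : hom X Y) :
  f ∘ gβ S X = gβ S Y ∘ fhom (gH S) (fhom (gG S) f).
Proof. apply (proj1 (proj1 (ghβ S))). Qed.
Lemma α_iso (S : Setup) (X : gC' S) : is_iso (gα S X). Proof. apply (proj2 (ghα S)). Qed.
Lemma β_iso (S : Setup) (X : gC S) : is_iso (gβ S X). Proof. apply (proj2 (ghβ S)). Qed.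
Lemma ααi (S : Setup) (X : gC' S) : gα S X ∘ αi S X = idm X. Proof. apply iinv_r. Qed.
Lemma αiα (S : Setup) (X : gC' S) : αi S X ∘ gα S X = idm _. Proof. apply iinv_l. Qed.
Lemma ββi (S : Setup) (X : gC S) : gβ S X ∘ βi S X = idm X. Proof. apply iinv_r. Qed.
Lemma βiβ (S : Setup) (X : gC S) : βi S X ∘ gβ S X = idm _. Proof. apply iinv_l. Qed.

Lemma β_HG (S : Setup) (Y : gC S) :
  gβ S (fobj (gH S) (fobj (gG S) Y)) = fhom (gH S) (fhom (gG S) (gβ S Y)).
Proof. apply (iso_cancel_l (β_iso S Y)). rewrite β_nat. reflexivity. Qed.
Lemma α_GH (S : Setup) (X : gC' S) :
  gα S (fobj (gG S) (fobj (gH S) X)) = fhom (gG S) (fhom (gH S) (gα S X)).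
Proof. apply (iso_cancel_l (α_iso S X)). rewrite α_nat. reflexivity. Qed.

Lemma T1 (S : Setup) (Y : gC S) : α' S (fobj (gG S) Y) = fhom (gG S) (gβ S Y).
Proof.
  unfold α'. rewrite β_HG, cassoc, <- α_nat, <- cassoc, ααi, cidr. reflexivity.
Qed.
Lemma T2 (S : Setup) (X : gC' S) : fhom (gH S) (α' S X) = gβ S (fobj (gH S) X).
Proof.
  unfold α'. rewrite !(fcomp (hH S)), <- β_HG, cassoc, β_nat, <- cassoc.
  rewrite <- (fcomp (hH S)), <- α_GH, ααi, (fid (hH S)), cidr. reflexivity.
Qed.

Ltac nrm := repeat (rewrite cidl || rewrite cidr || rewrite cassoc).
Ltac fnrm h := repeat (rewrite (fcomp h)).

Lemma α'_mon (S : Setup) : is_mon_iso (mf_comp (gG S) (gH S)) (mf_id (gC' S)) (α' S).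
Proof.
  pose proof (hG S) as hG. pose proof (hH S) as hH.
  assert (a1 : is_mon_iso (mf_comp (gG S) (gH S)) (mf_comp (mf_comp (gG S) (gH S)) (mf_comp (gG S) (gH S)))
                 (fun X => αi S (fobj (gG S) (fobj (gH S) X)))).
  { pose proof (mon_iso_inv (proj2 (ghα S)) (proj1 (ghα S))) as h0.
    pose proof (mon_iso_whiskR (mf_comp (gG S) (gH S)) h0) as h1.
    refine (mon_iso_extL (F := mf_comp (mf_id _) (mf_comp (gG S) (gH S))) _ _ h1).
    - intros X Y. simpl. symmetry. apply cidl.
    - simpl. symmetry. apply cidl. }
  assert (a2 : is_mon_iso (mf_comp (mf_comp (gG S) (gH S)) (mf_comp (gG S) (gH S))) (mf_comp (gG S) (gH S))
                 (fun X => fhom (gG S) (gβ S (fobj (gH S) X)))).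
  { pose proof (mon_iso_whiskR (gH S) (ghβ S)) as h0.
    pose proof (mon_iso_whiskL hG h0) as h1.
    refine (mon_iso_extR (G := mf_comp (gG S) (mf_comp (mf_id _) (gH S))) _ _
             (mon_iso_extL (F := mf_comp (gG S) (mf_comp (mf_comp (gH S) (gG S)) (gH S))) _ _ h1)).
    all: simpl; intros; repeat (rewrite cidl || rewrite (fcomp hG) || rewrite (fcomp hH) || rewrite cassoc); reflexivity. }
  exact (mon_iso_vcomp (mon_iso_vcomp a1 a2) (ghα S)).
Qed.

Notation FF S s := (fsF (gfs S) s).
Definition GFH (S : Setup) (s : gΓ S) : MFData (gC' S) (gC' S) :=
  mf_comp (gG S) (mf_comp (FF S s) (gH S)).
Lemma FF_ok (S : Setup) s : is_monoidal_functor (FF S s). Proof. apply mf_ax. Qed.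
Lemma GFH_ok (S : Setup) s : is_monoidal_functor (GFH S s).
Proof. apply mf_comp_monoidal; [apply hG | apply mf_comp_monoidal; [apply FF_ok | apply hH]]. Qed.

Definition dec (S : Setup) (s : gΓ S) : {s = gone} + {s <> gone} :=
  excluded_middle_informative (s = gone).

Definition F'd (S : Setup) (s : gΓ S) : MFData (gC' S) (gC' S) :=
  match dec S s with left _ => mf_id (gC' S) | right _ => GFH S s end.
Lemma F'd_ok (S : Setup) s : is_monoidal_functor (F'd S s).
Proof. unfold F'd. destruct (dec S s). apply mf_id_monoidal. apply GFH_ok. Qed.
Definition F' (S : Setup) (s : gΓ S) : MonFunctor (gC' S) (gC' S) :=
  Build_MonFunctor (F'd_ok S s).

Definition αi' (S : Setup) (X : gC' S) : hom X (fobj (gG S) (fobj (gH S) X)) :=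
  iinv (proj2 (α'_mon S) X).
Lemma αi'_mon (S : Setup) : is_mon_iso (mf_id (gC' S)) (mf_comp (gG S) (gH S)) (αi' S).
Proof. apply (mon_iso_inv (proj2 (α'_mon S)) (proj1 (α'_mon S))). Qed.

Definition obeq (S : Setup) (s : gΓ S) (e : s = gone) (X : gC' S) :
  fobj (GFH S s) X = fobj (gG S) (fobj (gH S) X) :=
  eq_trans (f_equal (fun r => fobj (gG S) (fobj (FF S r) (fobj (gH S) X))) e)
    (f_equal (fobj (gG S)) (fobj_eq (fs_one (fs_ax (gfs S))) (fobj (gH S) X))).

Definition ηone (S : Setup) (s : gΓ S) (e : s = gone) (X : gC' S) : hom X (fobj (GFH S s) X) :=
  hom_cast eq_refl (eq_sym (obeq S s e X)) (αi' S X).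

Definition η (S : Setup) (s : gΓ S) : forall X : gC' S, hom (fobj (F'd S s) X) (fobj (GFH S s) X) :=
  match dec S s as d return forall X : gC' S,
     hom (fobj (match d with left _ => mf_id (gC' S) | right _ => GFH S s end) X) (fobj (GFH S s) X)
  with
  | left e => fun X => ηone S s e X
  | right _ => fun X => idm _
  end.

Lemma ηone_mon_aux (S : Setup) (K : MFData (gC S) (gC S)) (eK : K = mf_id _)
  (p : forall X, fobj (gG S) (fobj K (fobj (gH S) X)) = fobj (gG S) (fobj (gH S) X)) :
  is_mon_iso (mf_id (gC' S)) (mf_comp (gG S) (mf_comp K (gH S)))
    (fun X => hom_cast eq_refl (eq_sym (p X)) (αi' S X)).
Proof.
  subst K.
  assert (E : (fun X => hom_cast eq_refl (eq_sym (p X)) (αi' S X)) = αi' S).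
  { apply functional_extensionality_dep. intros X. apply hom_cast_refl. }
  rewrite E.
  refine (mon_iso_extR (G := mf_comp (gG S) (gH S)) _ _ (αi'_mon S)); simpl; intros;
    rewrite ?cidl; reflexivity.
Qed.

Lemma η_mon (S : Setup) (s : gΓ S) : is_mon_iso (F' S s) (GFH S s) (η S s).
Proof.
  unfold F', η. simpl. unfold F'd. destruct (dec S s) as [e|n].
  - subst s. unfold ηone. apply ηone_mon_aux. apply (fs_one (fs_ax (gfs S))).
  - apply mon_nat_idm.
Qed.

Definition ηi (S : Setup) (s : gΓ S) (X : gC' S) : hom (fobj (GFH S s) X) (fobj (F' S s) X) :=
  iinv (proj2 (η_mon S s) X).
Lemma ηi_mon (S : Setup) (s : gΓ S) : is_mon_iso (GFH S s) (F' S s) (ηi S s).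
Proof. apply (mon_iso_inv (proj2 (η_mon S s)) (proj1 (η_mon S s))). Qed.

Definition θ' (S : Setup) (s t : gΓ S) (X : gC' S) :
  hom (fobj (F' S s) (fobj (F' S t) X)) (fobj (F' S (gmul s t)) X) :=
  ηi S (gmul s t) X
  ∘ (fhom (gG S) (fsθ (gfs S) s t (fobj (gH S) X))
  ∘ (fhom (gG S) (fhom (FF S s) (gβ S (fobj (FF S t) (fobj (gH S) X))))
  ∘ (fhom (gG S) (fhom (FF S s) (fhom (gH S) (η S t X)))
  ∘ η S s (fobj (F' S t) X)))).

Lemma θ'_mon (S : Setup) (s t : gΓ S) :
  is_mon_iso (mf_comp (F' S s) (F' S t)) (F' S (gmul s t)) (θ' S s t).
Proof.
  pose proof (hG S) as hG. pose proof (hH S) as hH.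
  pose proof (FF_ok S s) as hs. pose proof (FF_ok S t) as ht.
  pose proof (mon_iso_whiskR (F' S t) (η_mon S s)) as p1.
  pose proof (mon_iso_whiskL (GFH_ok S s) (η_mon S t)) as p2.
  assert (p3 : is_mon_iso (mf_comp (GFH S s) (GFH S t))
                 (mf_comp (gG S) (mf_comp (mf_comp (FF S s) (FF S t)) (gH S)))
                 (fun X => fhom (gG S) (fhom (FF S s) (gβ S (fobj (FF S t) (fobj (gH S) X)))))).
  { pose proof (mon_iso_whiskL hG (mon_iso_whiskL hs
                  (mon_iso_whiskR (mf_comp (FF S t) (gH S)) (ghβ S)))) as h1.
    refine (mon_iso_extR (G := mf_comp (gG S) (mf_comp (FF S s) (mf_comp (mf_id _) (mf_comp (FF S t) (gH S))))) _ _
             (mon_iso_extL (F := mf_comp (gG S) (mf_comp (FF S s) (mf_comp (mf_comp (gH S) (gG S)) (mf_comp (FF S t) (gH S))))) _ _ h1)).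
    all: simpl; intros; repeat (rewrite cidl || rewrite (fcomp hG) || rewrite (fcomp hH)
                                || rewrite (fcomp hs) || rewrite (fcomp ht) || rewrite cassoc); reflexivity. }
  pose proof (mon_iso_whiskL hG (mon_iso_whiskR (gH S) (fs_iso (fs_ax (gfs S)) s t))) as p4.
  pose proof (ηi_mon S (gmul s t)) as p5.
  exact (mon_iso_vcomp (mon_iso_vcomp (mon_iso_vcomp (mon_iso_vcomp p1 p2) p3) p4) p5).
Qed.

Definition θ'i (S : Setup) (s t : gΓ S) (X : gC' S) :
  hom (fobj (F' S (gmul s t)) X) (fobj (F' S s) (fobj (F' S t) X)) :=
  iinv (proj2 (θ'_mon S s t) X).

Lemma fs_one' (S : Setup) : mfd (F' S gone) = mf_id (gC' S).
Proof. unfold F'; simpl; unfold F'd. destruct (dec S gone); [reflexivity | congruence]. Qed.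

Lemma η_one (S : Setup) (X : gC' S) : η S gone X ≅ αi' S X.
Proof. unfold η, F'd. destruct (dec S gone) as [e|n]; [unfold ηone; apply heq_cast | congruence]. Qed.

Lemma heq_inv (M : MonCat) (A B A' B' : M) (f : hom A B) (g : hom B A) (f' : hom A' B')
  (g' : hom B' A') : f ≅ f' -> g ∘ f = idm A -> f' ∘ g' = idm B' -> g ≅ g'.
Proof.
  intros [e1 [e2 h]] h1 h2. subst A' B'. rewrite hom_cast_refl in h. subst f'.
  apply eq_heq. rewrite <- (cidr g), <- h2, cassoc, h1, cidl. reflexivity.
Qed.

Arguments heq_inv {M A B A' B' f g f' g'}.
Lemma ηηi (S : Setup) s X : η S s X ∘ ηi S s X = idm _. Proof. apply iinv_r. Qed.
Lemma ηiη (S : Setup) s X : ηi S s X ∘ η S s X = idm _. Proof. apply iinv_l. Qed.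
Lemma α'αi' (S : Setup) X : α' S X ∘ αi' S X = idm _. Proof. apply iinv_r. Qed.
Lemma αi'α' (S : Setup) X : αi' S X ∘ α' S X = idm _. Proof. apply iinv_l. Qed.

Lemma ηi_one (S : Setup) (X : gC' S) : ηi S gone X ≅ α' S X.
Proof.
  apply (heq_inv (η_one S X)); [apply ηiη | apply αi'α'].
Qed.

Lemma αi'_nat (S : Setup) (A B : gC' S) (f : hom A B) :
  fhom (gG S) (fhom (gH S) f) ∘ αi' S A = αi' S B ∘ f.
Proof. apply (proj1 (proj1 (αi'_mon S))). Qed.
Lemma η_nat (S : Setup) s (A B : gC' S) (f : hom A B) :
  fhom (gG S) (fhom (FF S s) (fhom (gH S) f)) ∘ η S s A = η S s B ∘ fhom (F' S s) f.
Proof. apply (proj1 (proj1 (η_mon S s))). Qed.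
Lemma θ_nat (S : Setup) s t (A B : gC S) (f : hom A B) :
  fhom (FF S (gmul s t)) f ∘ fsθ (gfs S) s t A = fsθ (gfs S) s t B ∘ fhom (FF S s) (fhom (FF S t) f).
Proof. apply (proj1 (proj1 (fs_iso (fs_ax (gfs S)) s t))). Qed.

Lemma θ_unitl (S : Setup) s (Y : gC S) : fsθ (gfs S) gone s Y ≅ idm (fobj (FF S s) Y).
Proof. eexists; eexists. apply (fs_unitl (fs_ax (gfs S))). Qed.
Lemma θ_unitr (S : Setup) s (Y : gC S) : fsθ (gfs S) s gone Y ≅ idm (fobj (FF S s) Y).
Proof. eexists; eexists. apply (fs_unitr (fs_ax (gfs S))). Qed.
Lemma θ_cocycle (S : Setup) s t g (Y : gC S) :
  fsθ (gfs S) s (gmul t g) Y ∘ fhom (FF S s) (fsθ (gfs S) t g Y)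
  ≅ fsθ (gfs S) (gmul s t) g Y ∘ fsθ (gfs S) s t (fobj (FF S g) Y).
Proof. apply heq_sym. rewrite (fs_cocycle (fs_ax (gfs S))). apply heq_cast. Qed.
Lemma FF_one (S : Setup) : mfd (FF S gone) = mf_id (gC S).
Proof. apply (fs_one (fs_ax (gfs S))). Qed.

Lemma θ'_unitl (S : Setup) s (X : gC' S) : θ' S gone s X ≅ idm (fobj (F' S s) X).
Proof.
  pose proof (hG S) as hG. pose proof (hH S) as hH.
  eapply heq_trans with (g := ηi S s X ∘ (fhom (gG S) (idm _)
      ∘ (fhom (gG S) (gβ S (fobj (FF S s) (fobj (gH S) X)))
      ∘ (fhom (gG S) (fhom (gH S) (η S s X)) ∘ αi' S (fobj (F' S s) X))))).
  - unfold θ'. apply heq_comp; [apply heq_comp; [apply heq_comp; [apply heq_comp|]|]|].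
    + apply η_one.
    + apply heq_fhom. apply (fhom_id_heq (FF_one S)).
    + apply heq_fhom. apply (fhom_id_heq (FF_one S)).
    + apply heq_fhom. apply θ_unitl.
    + apply (heq_fam (fun r => ηi S r X)). apply gmul1l.
  - apply eq_heq. rewrite (fid hG), cidl, αi'_nat, <- T1, !cassoc, <- (cassoc (αi' S _)), α'αi', cidr.
    apply ηiη.
Qed.

Lemma θ'_unitr (S : Setup) s (X : gC' S) : θ' S s gone X ≅ idm (fobj (F' S s) X).
Proof.
  pose proof (hG S) as hG. pose proof (hH S) as hH. pose proof (FF_ok S s) as hs.
  eapply heq_trans with (g := ηi S s X ∘ (fhom (gG S) (idm _)
      ∘ (fhom (gG S) (fhom (FF S s) (gβ S (fobj (gH S) X)))
      ∘ (fhom (gG S) (fhom (FF S s) (fhom (gH S) (αi' S X))) ∘ η S s X)))).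
  - unfold θ'. apply heq_comp; [apply heq_comp; [apply heq_comp; [apply heq_comp|]|]|].
    + apply (heq_fam (η S s)). apply (fobj_eq (fs_one' S) X).
    + do 3 apply heq_fhom. apply η_one.
    + do 2 apply heq_fhom. apply (heq_fam (gβ S)). apply (fobj_eq (FF_one S) (fobj (gH S) X)).
    + apply heq_fhom. apply θ_unitr.
    + apply (heq_fam (fun r => ηi S r X)). apply gmul1r.
  - apply eq_heq. rewrite (fid hG), cidl, <- T2, (cassoc (η S s X)). unfold GFH. simpl. rewrite <- (fcomp hG), <- (fcomp hs),
      <- (fcomp hH), α'αi', (fid hH), (fid hs), (fid hG), cidl.
    apply ηiη.
Qed.

Lemma βnat_l (S : Setup) s (A B : gC S) (f : hom A B) (W : gC' S)
  (x : hom (fobj (gG S) (fobj (FF S s) B)) W) :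
  x ∘ fhom (gG S) (fhom (FF S s) (gβ S B))
    ∘ fhom (gG S) (fhom (FF S s) (fhom (gH S) (fhom (gG S) f)))
  = x ∘ fhom (gG S) (fhom (FF S s) f) ∘ fhom (gG S) (fhom (FF S s) (gβ S A)).
Proof.
  pose proof (hG S) as hG. pose proof (FF_ok S s) as hs.
  rewrite <- !cassoc, <- !(fcomp hG), <- !(fcomp hs), β_nat. reflexivity.
Qed.
Lemma θnat_l (S : Setup) s t (A B : gC S) (f : hom A B) (W : gC' S)
  (x : hom (fobj (gG S) (fobj (FF S (gmul s t)) B)) W) :
  x ∘ fhom (gG S) (fhom (FF S (gmul s t)) f) ∘ fhom (gG S) (fsθ (gfs S) s t A)
  = x ∘ fhom (gG S) (fsθ (gfs S) s t B) ∘ fhom (gG S) (fhom (FF S s) (fhom (FF S t) f)).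
Proof.
  pose proof (hG S) as hG.
  rewrite <- !cassoc, <- !(fcomp hG), θ_nat. reflexivity.
Qed.
Lemma ηηi_l (S : Setup) s (X : gC' S) (W : gC' S) (x : hom (fobj (GFH S s) X) W) :
  x ∘ η S s X ∘ ηi S s X = x.
Proof. rewrite <- cassoc, ηηi, cidr. reflexivity. Qed.
Lemma ηηiH_l (S : Setup) s r (X : gC' S) (W : gC' S)
  (x : hom (fobj (gG S) (fobj (FF S s) (fobj (gH S) (fobj (GFH S r) X)))) W) :
  x ∘ fhom (gG S) (fhom (FF S s) (fhom (gH S) (η S r X)))
    ∘ fhom (gG S) (fhom (FF S s) (fhom (gH S) (ηi S r X))) = x.
Proof.
  pose proof (hG S) as hG. pose proof (hH S) as hH. pose proof (FF_ok S s) as hs.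
  rewrite <- !cassoc, <- !(fcomp hG), <- !(fcomp hs), <- !(fcomp hH), ηηi, (fid hH), (fid hs),
    (fid hG), cidr. reflexivity.
Qed.

Lemma θ'_cocycle (S : Setup) s t g (X : gC' S) :
  θ' S s (gmul t g) X ∘ fhom (F' S s) (θ' S t g X)
  ≅ θ' S (gmul s t) g X ∘ θ' S s t (fobj (F' S g) X).
Proof.
  pose proof (hG S) as hG. pose proof (hH S) as hH.
  pose proof (FF_ok S s) as hs. pose proof (FF_ok S t) as ht.
  set (Y := fobj (gH S) X).
  set (b1 := fhom (gG S) (fhom (FF S s) (fhom (FF S t) (gβ S (fobj (FF S g) Y))))).
  set (b2 := fhom (gG S) (fhom (FF S s) (fhom (FF S t) (fhom (gH S) (η S g X))))).
  set (b3 := fhom (gG S) (fhom (FF S s) (gβ S (fobj (FF S t) (fobj (gH S) (fobj (F' S g) X)))))).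
  set (b4 := fhom (gG S) (fhom (FF S s) (fhom (gH S) (η S t (fobj (F' S g) X))))).
  set (b5 := η S s (fobj (F' S t) (fobj (F' S g) X))).
  assert (EL : θ' S s (gmul t g) X ∘ fhom (F' S s) (θ' S t g X)
    = ηi S (gmul s (gmul t g)) X
      ∘ fhom (gG S) (fsθ (gfs S) s (gmul t g) Y ∘ fhom (FF S s) (fsθ (gfs S) t g Y))
      ∘ b1 ∘ b2 ∘ b3 ∘ b4 ∘ b5).
  { unfold θ', b1, b2, b3, b4, b5, Y. rewrite !cassoc, (lpref (eq_sym (η_nat S s _ _ _))).
    repeat (rewrite (fcomp hH) || rewrite (fcomp hs) || rewrite (fcomp hG) || rewrite cassoc).
    rewrite (ηηiH_l S s (gmul t g) X).
    rewrite !(βnat_l S s). repeat (rewrite (fcomp hG) || rewrite cassoc). reflexivity. }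
  assert (ER : θ' S (gmul s t) g X ∘ θ' S s t (fobj (F' S g) X)
    = ηi S (gmul (gmul s t) g) X
      ∘ fhom (gG S) (fsθ (gfs S) (gmul s t) g Y ∘ fsθ (gfs S) s t (fobj (FF S g) Y))
      ∘ b1 ∘ b2 ∘ b3 ∘ b4 ∘ b5).
  { unfold θ', b1, b2, b3, b4, b5, Y. rewrite !cassoc.
    rewrite (ηηi_l S (gmul s t) (fobj (F' S g) X)).
    rewrite !(θnat_l S s t). repeat (rewrite (fcomp hG) || rewrite cassoc). reflexivity. }
  rewrite EL, ER.
  do 5 (apply heq_comp; [apply heq_refl|]).
  apply heq_comp.
  - exact (@heq_fhom _ _ (gG S) _ _ _ _ _ _ (θ_cocycle S s t g Y)).
  - apply (heq_fam (fun r => ηi S r X)). apply gmulA.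
Qed.


Lemma θ'_iso (S : Setup) s t X : is_iso (θ' S s t X). Proof. apply (proj2 (θ'_mon S s t)). Qed.

Lemma mon_iso_reindex (C D : MonCatData) (T : Type) (Φ : T -> MFData C D) (K : MFData C D)
  (r r' : T) (a : forall X, hom (fobj K X) (fobj (Φ r) X)) :
  r = r' -> is_mon_iso K (Φ r) a -> exists a', is_mon_iso K (Φ r') a'.
Proof. intros <- h. exists a. exact h. Qed.
Lemma mon_iso_retarget (C D : MonCatData) (K L L' : MFData C D) (a : forall X, hom (fobj K X) (fobj L X)) :
  L = L' -> is_mon_iso K L a -> exists a', is_mon_iso K L' a'.
Proof. intros <- h. exists a. exact h. Qed.

Lemma F'_autoeq (S : Setup) (s : gΓ S) : is_monoidal_equivalence (F' S s).
Proof.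
  split; [apply mf_ax|]. exists (F' S (ginv s)). split; [apply mf_ax|]. split.
  - destruct (@mon_iso_reindex _ _ _ (fun r => mfd (F' S r)) _ _ _ _ (gmulVr s) (θ'_mon S s (ginv s))) as [a h].
    exact (@mon_iso_retarget _ _ _ _ _ _ (fs_one' S) h).
  - destruct (@mon_iso_reindex _ _ _ (fun r => mfd (F' S r)) _ _ _ _ (gmulVl s) (θ'_mon S (ginv s) s)) as [a h].
    exact (@mon_iso_retarget _ _ _ _ _ _ (fs_one' S) h).
Qed.

Lemma fs'_ax (S : Setup) : is_factor_set (F' S) (θ' S) (θ'i S).
Proof.
  refine (@Build_is_factor_set _ _ (F' S) (θ' S) (θ'i S) (F'_autoeq S) (θ'_mon S) _ (fs_one' S) _ _ _).
  - intros s t X. split; [apply iinv_l | apply iinv_r].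
  - intros s X. apply cast_heq. apply θ'_unitl.
  - intros s X. apply cast_heq. apply θ'_unitr.
  - intros s t g X. symmetry. apply cast_heq. apply θ'_cocycle.
Qed.

Definition fs' (S : Setup) : FactorSet (gΓ S) (gC' S) := Build_FactorSet (fs'_ax S).

Set Implicit Arguments.
Unset Strict Implicit.

Lemma dx (Γ : Group) (C : MonCat) (fs : FactorSet Γ C) (A B : C) (r s : Γ)
  (x : hom (fobj (fsF fs r) A) B) (y : hom (fobj (fsF fs s) A) B) :
  r = s -> x ≅ y ->
  existT (fun t => hom (fobj (fsF fs t) A) B) r x = existT (fun t => hom (fobj (fsF fs t) A) B) s y.
Proof. intros e h. exact (@existT_heq _ _ (fun t => fobj (fsF fs t) A) _ _ _ _ _ e h). Qed.

Lemma θ_unitl_g (Γ : Group) (C : MonCat) (fs : FactorSet Γ C) s (A : C) :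
  fsθ fs gone s A ≅ idm (fobj (fsF fs s) A).
Proof. eexists; eexists. apply (fs_unitl (fs_ax fs)). Qed.
Lemma θ_unitr_g (Γ : Group) (C : MonCat) (fs : FactorSet Γ C) s (A : C) :
  fsθ fs s gone A ≅ idm (fobj (fsF fs s) A).
Proof. eexists; eexists. apply (fs_unitr (fs_ax fs)). Qed.
Lemma θi_unitl_g (Γ : Group) (C : MonCat) (fs : FactorSet Γ C) s (A : C) :
  fsθi fs gone s A ≅ idm (fobj (fsF fs s) A).
Proof.
  apply (heq_inv (θ_unitl_g fs s A)); [apply (fs_inv (fs_ax fs)) | apply cidl].
Qed.
Lemma θi_unitr_g (Γ : Group) (C : MonCat) (fs : FactorSet Γ C) s (A : C) :
  fsθi fs s gone A ≅ idm (fobj (fsF fs s) A).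
Proof.
  apply (heq_inv (θ_unitr_g fs s A)); [apply (fs_inv (fs_ax fs)) | apply cidl].
Qed.
Lemma fhom_one_g (Γ : Group) (C : MonCat) (fs : FactorSet Γ C) (A B : C) (f : hom A B) :
  fhom (fsF fs gone) f ≅ f.
Proof. apply (fhom_id_heq (fs_one (fs_ax fs))). Qed.

Lemma D1 (Γ : Group) (C : MonCat) (fs : FactorSet Γ C) (A B D : C) (s : Γ)
  (u : hom (fobj (fsF fs s) A) B) (c : hom (fobj (fsF fs gone) B) D) (c0 : hom B D) :
  c ≅ c0 ->
  @comp (Delta fs) A B D (existT (fun t => hom (fobj (fsF fs t) B) D) gone c)
    (existT (fun t => hom (fobj (fsF fs t) A) B) s u)
  = existT (fun t => hom (fobj (fsF fs t) A) D) s (c0 ∘ u).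
Proof.
  intros h. simpl. apply dx; [apply gmul1l|].
  eapply heq_trans; [| apply eq_heq, (cidr (c0 ∘ u))].
  apply heq_comp; [apply θi_unitl_g|]. apply heq_comp; [apply fhom_one_g | exact h].
Qed.

Lemma D2 (Γ : Group) (C : MonCat) (fs : FactorSet Γ C) (A B0 B : C) (s : Γ)
  (c : hom (fobj (fsF fs gone) A) B0) (c0 : hom A B0) (u : hom (fobj (fsF fs s) B0) B) :
  c ≅ c0 ->
  @comp (Delta fs) A B0 B (existT (fun t => hom (fobj (fsF fs t) B0) B) s u)
    (existT (fun t => hom (fobj (fsF fs t) A) B0) gone c)
  = existT (fun t => hom (fobj (fsF fs t) A) B) s (u ∘ fhom (fsF fs s) c0).
Proof.
  intros h. simpl. apply dx; [apply gmul1r|].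
  eapply heq_trans; [| apply eq_heq, (cidr (u ∘ fhom (fsF fs s) c0))].
  apply heq_comp; [apply θi_unitr_g|]. apply heq_comp; [apply heq_fhom, h | apply heq_refl].
Qed.

Unset Implicit Arguments.
Set Strict Implicit.

Definition PhiD (S : Setup) : FunctorData (Delta (gfs S)) (Delta (fs' S)) :=
  @Build_FunctorData (Delta (gfs S)) (Delta (fs' S)) (fun A : Delta (gfs S) => fobj (gG S) A)
    (fun (A B : Delta (gfs S)) (f : hom A B) =>
       existT (fun t => hom (fobj (F' S t) (fobj (gG S) A)) (fobj (gG S) B)) (projT1 f)
         (fhom (gG S) (projT2 f) ∘ (fhom (gG S) (fhom (FF S (projT1 f)) (gβ S A))
            ∘ η S (projT1 f) (fobj (gG S) A)))).

Definition PsiD (S : Setup) : FunctorData (Delta (fs' S)) (Delta (gfs S)) :=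
  @Build_FunctorData (Delta (fs' S)) (Delta (gfs S)) (fun A : Delta (fs' S) => fobj (gH S) A)
    (fun (A B : Delta (fs' S)) (f : hom A B) =>
       existT (fun t => hom (fobj (FF S t) (fobj (gH S) A)) (fobj (gH S) B)) (projT1 f)
         (fhom (gH S) (projT2 f) ∘ (fhom (gH S) (ηi S (projT1 f) A)
            ∘ βi S (fobj (FF S (projT1 f)) (fobj (gH S) A))))).

Lemma θiθ_l (S : Setup) s t (A : gC S) (W : gC' S)
  (x : hom (fobj (gG S) (fobj (FF S s) (fobj (FF S t) A))) W) :
  x ∘ fhom (gG S) (fsθi (gfs S) s t A) ∘ fhom (gG S) (fsθ (gfs S) s t A) = x.
Proof.
  pose proof (hG S) as hG.
  rewrite <- cassoc, <- (fcomp hG), (proj1 (fs_inv (fs_ax (gfs S)) s t A)), (fid hG), cidr.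
  reflexivity.
Qed.

Lemma Phi_id (S : Setup) (A : Delta (gfs S)) : Fm (PhiD S) (idm A) = idm (Fo (PhiD S) A).
Proof.
  pose proof (hG S) as hG.
  simpl. apply (@dx _ _ (fs' S)); [reflexivity|].
  eapply heq_trans with (g := fhom (gG S) (idm (A : gC S)) ∘ (fhom (gG S) (gβ S A) ∘ αi' S (fobj (gG S) A))).
  - apply heq_comp; [apply heq_comp|].
    + apply η_one.
    + apply heq_fhom. apply (fhom_id_heq (FF_one S)).
    + apply heq_fhom. apply heq_cast.
  - eapply heq_trans; [| apply heq_sym, heq_cast].
    apply eq_heq. rewrite (fid hG), cidl, <- T1, α'αi'. reflexivity.
Qed.

Lemma Phi_comp (S : Setup) (A B E : Delta (gfs S)) (f : hom A B) (g : hom B E) :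
  Fm (PhiD S) (g ∘ f) = Fm (PhiD S) g ∘ Fm (PhiD S) f.
Proof.
  pose proof (hG S) as hG. pose proof (hH S) as hH.
  destruct f as [s u], g as [t v]. simpl. apply (@dx _ _ (fs' S)); [reflexivity|]. apply eq_heq.
  pose proof (FF_ok S t) as ht. pose proof (FF_ok S s) as hs.
  apply (iso_cancel_r (θ'_iso S t s (fobj (gG S) A))).
  rewrite <- (cassoc (θ' S t s _) (θ'i S t s _)). unfold θ'i. rewrite iinv_l, cidr.
  unfold θ'. rewrite !cassoc, (lpref (eq_sym (η_nat S t _ _ _))).
  repeat (rewrite (fcomp hG) || rewrite (fcomp ht) || rewrite (fcomp hH) || rewrite cassoc).
  rewrite (ηηi_l S (gmul t s)).
  rewrite (θnat_l S t s), θiθ_l.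
  rewrite !(βnat_l S t). reflexivity.
Qed.

Lemma βinat_l (S : Setup) (A B W : gC S) (f : hom A B) (x : hom (fobj (gH S) (fobj (gG S) B)) W) :
  x ∘ βi S B ∘ f = x ∘ fhom (gH S) (fhom (gG S) f) ∘ βi S A.
Proof.
  rewrite <- !cassoc. f_equal.
  apply (iso_cancel_l (β_iso S B)). rewrite !cassoc, ββi, cidl, <- β_nat, <- cassoc, ββi, cidr.
  reflexivity.
Qed.
Lemma ηinat_l (S : Setup) t (A B W : gC' S) (f : hom A B) (x : hom (fobj (F' S t) B) W) :
  x ∘ ηi S t B ∘ fhom (gG S) (fhom (FF S t) (fhom (gH S) f)) = x ∘ fhom (F' S t) f ∘ ηi S t A.
Proof.
  rewrite <- !cassoc. f_equal. symmetry. apply (proj1 (proj1 (ηi_mon S t))).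
Qed.
Lemma ββiFt_l (S : Setup) t (Y : gC S) (W : gC' S)
  (x : hom (fobj (gG S) (fobj (FF S t) Y)) W) :
  x ∘ fhom (gG S) (fhom (FF S t) (gβ S Y)) ∘ fhom (gG S) (fhom (FF S t) (βi S Y)) = x.
Proof.
  pose proof (hG S) as hG. pose proof (FF_ok S t) as ht.
  rewrite <- cassoc, <- (fcomp hG), <- (fcomp ht), ββi, (fid ht), (fid hG), cidr. reflexivity.
Qed.

Lemma cong_r (C : CatData) (A B D : C) (f : hom A B) (g g' : hom B D) : g = g' -> g ∘ f = g' ∘ f.
Proof. intros ->. reflexivity. Qed.

Lemma Psi_id (S : Setup) (A : Delta (fs' S)) : Fm (PsiD S) (idm A) = idm (Fo (PsiD S) A).
Proof.
  pose proof (hH S) as hH.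
  simpl. apply (@dx _ _ (gfs S)); [reflexivity|].
  eapply heq_trans with (g := fhom (gH S) (idm (A : gC' S)) ∘ (fhom (gH S) (α' S A) ∘ βi S (fobj (gH S) A))).
  - apply heq_comp; [apply heq_comp|].
    + apply (heq_fam (βi S)). apply (fobj_eq (FF_one S)).
    + apply heq_fhom. apply ηi_one.
    + apply heq_fhom. apply heq_cast.
  - eapply heq_trans; [| apply heq_sym, heq_cast].
    apply eq_heq. rewrite (fid hH), cidl, T2, ββi. reflexivity.
Qed.

Lemma Psi_comp (S : Setup) (A B E : Delta (fs' S)) (f : hom A B) (g : hom B E) :
  Fm (PsiD S) (g ∘ f) = Fm (PsiD S) g ∘ Fm (PsiD S) f.
Proof.
  pose proof (hG S) as hG. pose proof (hH S) as hH.
  destruct f as [s u], g as [t v]. simpl. apply (@dx _ _ (gfs S)); [reflexivity|]. apply eq_heq.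
  pose proof (FF_ok S t) as ht. pose proof (FF_ok S s) as hs.
  assert (K : θ'i S t s A ∘ ηi S (gmul t s) A ∘ fhom (gG S) (fsθ (gfs S) t s (fobj (gH S) A))
            = ηi S t (fobj (F' S s) A) ∘ fhom (gG S) (fhom (FF S t) (fhom (gH S) (ηi S s A)))
              ∘ fhom (gG S) (fhom (FF S t) (βi S (fobj (FF S s) (fobj (gH S) A))))).
  { apply (iso_cancel_l (θ'_iso S t s A)). rewrite !cassoc. unfold θ'i. rewrite iinv_r, cidl.
    unfold θ'. rewrite !cassoc, (ηηi_l S t), (ηηiH_l S t s A), ββiFt_l. reflexivity. }
  assert (hθ : is_iso (fsθ (gfs S) t s (fobj (gH S) A))) by apply (proj2 (fs_iso (fs_ax (gfs S)) t s)).
  apply (iso_cancel_r hθ).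
  rewrite (lpref (proj1 (fs_inv (fs_ax (gfs S)) t s _))), cidr.
  repeat (rewrite (fcomp hH) || rewrite (fcomp ht) || rewrite cassoc).
  repeat rewrite βinat_l.
  apply cong_r.
  rewrite <- !cassoc, <- !(fcomp hH), !cassoc.
  f_equal.
  transitivity (v ∘ fhom (F' S t) u ∘ (θ'i S t s A ∘ ηi S (gmul t s) A
                  ∘ fhom (gG S) (fsθ (gfs S) t s (fobj (gH S) A)))).
  { rewrite !cassoc. reflexivity. }
  rewrite K.
  transitivity (v ∘ (fhom (F' S t) u ∘ ηi S t (fobj (F' S s) A))
     ∘ fhom (gG S) (fhom (FF S t) (fhom (gH S) (ηi S s A)))
     ∘ fhom (gG S) (fhom (FF S t) (βi S (fobj (FF S s) (fobj (gH S) A))))).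
  { rewrite !cassoc. reflexivity. }
  rewrite (proj1 (proj1 (ηi_mon S t))). rewrite !cassoc. reflexivity.
Qed.

Definition epsD (S : Setup) (X : Delta (gfs S)) :
  hom (Fo (fd_comp (PsiD S) (PhiD S)) X) (Fo (fd_id _) X) :=
  existT (fun t => hom (fobj (fsF (gfs S) t) (fobj (gH S) (fobj (gG S) X))) X) gone
    (hom_cast (eq_sym (fobj_eq (fs_one (fs_ax (gfs S))) (fobj (gH S) (fobj (gG S) X)))) eq_refl
      (gβ S X)).
Definition epsiD (S : Setup) (X : Delta (gfs S)) : @hom (Delta (gfs S)) X (fobj (gH S) (fobj (gG S) X)) :=
  existT (fun t => hom (fobj (fsF (gfs S) t) X) (fobj (gH S) (fobj (gG S) X))) gone
    (hom_cast (eq_sym (fobj_eq (fs_one (fs_ax (gfs S))) X)) eq_refl (βi S X)).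

Lemma HηηiH_l (S : Setup) s (X : gC' S) (W : gC S)
  (x : hom (fobj (gH S) (fobj (GFH S s) X)) W) :
  x ∘ fhom (gH S) (η S s X) ∘ fhom (gH S) (ηi S s X) = x.
Proof.
  pose proof (hH S) as hH. rewrite <- cassoc, <- (fcomp hH), ηηi, (fid hH), cidr. reflexivity.
Qed.

Lemma eps_nat (S : Setup) (X Y : Delta (gfs S)) (f : hom X Y) :
  Fm (fd_id _) f ∘ epsD S X = epsD S Y ∘ Fm (fd_comp (PsiD S) (PhiD S)) f.
Proof.
  pose proof (hG S) as hG. pose proof (hH S) as hH.
  destruct f as [s u].
  etransitivity. { eapply D2. apply heq_cast. }
  etransitivity. 2:{ symmetry. eapply D1. apply heq_cast. }
  apply (@dx _ _ (gfs S)); [reflexivity|]. apply eq_heq.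
  pose proof (FF_ok S s) as hs.
  simpl. rewrite !(fcomp hH), !cassoc.
  transitivity (gβ S Y ∘ fhom (gH S) (fhom (gG S) u)
    ∘ fhom (gH S) (fhom (gG S) (fhom (FF S s) (gβ S X)))
    ∘ (fhom (gH S) (η S s (fobj (gG S) X)) ∘ fhom (gH S) (ηi S s (fobj (gG S) X)))
    ∘ βi S (fobj (FF S s) (fobj (gH S) (fobj (gG S) X)))).
  2:{ rewrite !cassoc. reflexivity. }
  rewrite <- (fcomp hH), ηηi, (fid hH), cidr.
  rewrite <- (β_nat S _ _ u), (lpref (eq_sym (β_nat S _ _ (fhom (FF S s) (gβ S X))))), <- !cassoc, ββi, cidr. reflexivity.
Qed.

Lemma eps_iso (S : Setup) (X : Delta (gfs S)) : is_iso (epsD S X).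
Proof.
  exists (epsiD S X). split.
  - etransitivity; [eapply D1; apply heq_cast|].
    apply (@dx _ _ (gfs S)); [reflexivity|].
    eapply heq_trans; [apply heq_comp; [apply heq_cast | apply heq_refl]|].
    eapply heq_trans; [apply eq_heq, βiβ | apply heq_sym, heq_cast].
  - etransitivity; [eapply D1; apply heq_cast|].
    apply (@dx _ _ (gfs S)); [reflexivity|].
    eapply heq_trans; [apply heq_comp; [apply heq_cast | apply heq_refl]|].
    eapply heq_trans; [apply eq_heq, ββi | apply heq_sym, heq_cast].
Qed.

Definition delD (S : Setup) (X : Delta (fs' S)) :
  hom (Fo (fd_comp (PhiD S) (PsiD S)) X) (Fo (fd_id _) X) :=
  existT (fun t => hom (fobj (F' S t) (fobj (gG S) (fobj (gH S) X))) X) gone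
    (hom_cast (eq_sym (fobj_eq (fs_one' S) (fobj (gG S) (fobj (gH S) X)))) eq_refl (α' S X)).
Definition deliD (S : Setup) (X : Delta (fs' S)) : @hom (Delta (fs' S)) X (fobj (gG S) (fobj (gH S) X)) :=
  existT (fun t => hom (fobj (F' S t) X) (fobj (gG S) (fobj (gH S) X))) gone
    (hom_cast (eq_sym (fobj_eq (fs_one' S) X)) eq_refl (αi' S X)).

Lemma del_iso (S : Setup) (X : Delta (fs' S)) : is_iso (delD S X).
Proof.
  exists (deliD S X). split.
  - etransitivity; [eapply D1; apply heq_cast|].
    apply (@dx _ _ (fs' S)); [reflexivity|].
    eapply heq_trans; [apply heq_comp; [apply heq_cast | apply heq_refl]|].
    eapply heq_trans; [apply eq_heq, αi'α' | apply heq_sym, heq_cast].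
  - etransitivity; [eapply D1; apply heq_cast|].
    apply (@dx _ _ (fs' S)); [reflexivity|].
    eapply heq_trans; [apply heq_comp; [apply heq_cast | apply heq_refl]|].
    eapply heq_trans; [apply eq_heq, α'αi' | apply heq_sym, heq_cast].
Qed.

Lemma cong_l (C : CatData) (A B D : C) (h : hom B D) (g g' : hom A B) : g = g' -> h ∘ g = h ∘ g'.
Proof. intros ->. reflexivity. Qed.

Lemma F'_conj (S : Setup) s (A B : gC' S) (f : hom A B) :
  fhom (F' S s) f = ηi S s B ∘ (fhom (gG S) (fhom (FF S s) (fhom (gH S) f)) ∘ η S s A).
Proof. rewrite η_nat, cassoc, ηiη, cidl. reflexivity. Qed.

Lemma α'_nat (S : Setup) (A B : gC' S) (f : hom A B) :
  f ∘ α' S A = α' S B ∘ fhom (gG S) (fhom (gH S) f).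
Proof. apply (proj1 (proj1 (α'_mon S))). Qed.

Lemma del_nat (S : Setup) (X Y : Delta (fs' S)) (f : hom X Y) :
  Fm (fd_id _) f ∘ delD S X = delD S Y ∘ Fm (fd_comp (PhiD S) (PsiD S)) f.
Proof.
  pose proof (hG S) as hG. pose proof (hH S) as hH.
  destruct f as [s u].
  etransitivity. { eapply D2. apply heq_cast. }
  etransitivity. 2:{ symmetry. eapply D1. apply heq_cast. }
  apply (@dx _ _ (fs' S)); [reflexivity|]. apply eq_heq.
  pose proof (FF_ok S s) as hs. cbn [Fm Fo PhiD PsiD fd_comp fd_id projT1 projT2].
  transitivity (u ∘ (ηi S s X ∘ (fhom (gG S) (fhom (FF S s) (gβ S (fobj (gH S) X)))
                   ∘ η S s (fobj (gG S) (fobj (gH S) X))))).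
  { apply cong_l. rewrite <- T2. apply F'_conj. }
  transitivity (u ∘ ηi S s X ∘ (α' S (fobj (gG S) (fobj (FF S s) (fobj (gH S) X)))
     ∘ fhom (gG S) (βi S (fobj (FF S s) (fobj (gH S) X))))
     ∘ (fhom (gG S) (fhom (FF S s) (gβ S (fobj (gH S) X))) ∘ η S s (fobj (gG S) (fobj (gH S) X)))).
  { rewrite T1, <- (fcomp hG), ββi, (fid hG), cidr, !cassoc. reflexivity. }
  rewrite !(fcomp hG), !cassoc.
  rewrite <- (α'_nat S _ _ u).
  do 3 apply cong_r. rewrite <- !cassoc. apply cong_l. apply (α'_nat S _ _ (ηi S s X)).
Qed.

Lemma Phi_equiv (S : Setup) : is_Gamma_equivalence (PhiD S).
Proof.
  split.
  - intros A B f. reflexivity.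
  - split.
    + split; [apply Phi_id | apply Phi_comp].
    + exists (PsiD S). split; [split; [apply Psi_id | apply Psi_comp]|]. split.
      * exists (epsD S). split; [intros; apply eps_nat | apply eps_iso].
      * exists (delD S). split; [intros; apply del_nat | apply del_iso].
Qed.

Theorem proposition2p1 (Γ : Group) (C C' : MonCat)
  (G : MonFunctor C C') (H : MonFunctor C' C)
  (α : forall X : C', hom (fobj G (fobj H X)) X)
  (β : forall X : C, hom (fobj H (fobj G X)) X)
  (hα : is_mon_iso (mf_comp G H) (mf_id C') α)
  (hβ : is_mon_iso (mf_comp H G) (mf_id C) β)
  (fs : FactorSet Γ C) :
  exists fs' : FactorSet Γ C',
    (forall s : Γ, exists η,
        is_mon_iso (fsF fs' s) (mf_comp G (mf_comp (fsF fs s) H)) η) /\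
    exists Φ : FunctorData (Delta fs) (Delta fs'),
      (forall A : C, Fo Φ A = fobj G A) /\ is_Gamma_equivalence Φ.
Proof.
  pose (S := {| gΓ := Γ; gC := C; gC' := C'; gG := G; gH := H; gα := α; gβ := β;
                ghα := hα; ghβ := hβ; gfs := fs |}).
  exists (fs' S). split.
  - intros s. exists (η S s). exact (η_mon S s).
  - exists (PhiD S). split; [intros; reflexivity | exact (Phi_equiv S)].
Qed.
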